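(* Consider the upper half-space model $\mathbb{H}^3=\{(x_1,x_2,x_3)\in\mathbb{R}^3: x_3>0\}$ with metric $g=\frac{1}{x_3^2}(dx_1^2+dx_2^2+dx_3^2)$. Let $E$ be a complete end of revolution in $\mathbb{H}^3$ about the $x_3$-axis, and suppose there is $z>0$ such that $E$ is contained on the horosphere $\{x_3=z\}$, i.e. $E\subset\{x\in\mathbb{H}^3: x_3\ge z\}$. Then $E$ is parabolic.
   Context: A complete end of revolution about the $x_3$-axis is the set $E=\{(\gamma_1(s)\cos\theta,\gamma_1(s)\sin\theta,\gamma_2(s)): s\ge0,\ \theta\in[0,2\pi)\}$, where $\gamma(s)=(\gamma_1(s),0,\gamma_2(s))$, $s\in[0,\infty)$, is a smooth regular curve with $\gamma_1>0$, $\gamma_2>0$ and infinite hyperbolic length; $E$ carries the metric induced by this immersion of $[0,\infty)\times\mathbb{S}^1$. An end $E$ is parabolic if every bounded harmonic function on $E$ is determined by its boundary values. *)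

(* Defs.v *)
From Stdlib Require Import Reals Lra.
From Coquelicot Require Import Coquelicot.
Open Scope R_scope.

Definition smooth (f : R -> R) : Prop := forall (n : nat) (x : R), ex_derive_n f n x.

Definition pd_s (f : R -> R -> R) : R -> R -> R :=
  fun s t => Derive (fun s' => f s' t) s.
Definition pd_t (f : R -> R -> R) : R -> R -> R :=
  fun s t => Derive (fun t' => f s t') t.

(* The immersion X(s,theta) = (g1 s cos theta, g1 s sin theta, g2 s) of
   [0,oo) x S^1 into the upper half-space model of H^3. *)
Definition X1 (g1 g2 : R -> R) : R -> R -> R := fun s t => g1 s * cos t.
Definition X2 (g1 g2 : R -> R) : R -> R -> R := fun s t => g1 s * sin t.
Definition X3 (g1 g2 : R -> R) : R -> R -> R := fun s t => g2 s.

(* Coefficients of the metric induced by g = (dx1^2+dx2^2+dx3^2)/x3^2. *)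
Definition metE (g1 g2 : R -> R) (s t : R) : R :=
  (pd_s (X1 g1 g2) s t ^ 2 + pd_s (X2 g1 g2) s t ^ 2 + pd_s (X3 g1 g2) s t ^ 2)
  / (X3 g1 g2 s t ^ 2).
Definition metF (g1 g2 : R -> R) (s t : R) : R :=
  (pd_s (X1 g1 g2) s t * pd_t (X1 g1 g2) s t
   + pd_s (X2 g1 g2) s t * pd_t (X2 g1 g2) s t
   + pd_s (X3 g1 g2) s t * pd_t (X3 g1 g2) s t)
  / (X3 g1 g2 s t ^ 2).
Definition metG (g1 g2 : R -> R) (s t : R) : R :=
  (pd_t (X1 g1 g2) s t ^ 2 + pd_t (X2 g1 g2) s t ^ 2 + pd_t (X3 g1 g2) s t ^ 2)
  / (X3 g1 g2 s t ^ 2).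
Definition metDet (g1 g2 : R -> R) (s t : R) : R :=
  metE g1 g2 s t * metG g1 g2 s t - metF g1 g2 s t ^ 2.

(* Laplace-Beltrami operator of the induced metric in coordinates (s, theta):
   Delta u = 1/sqrt(det g) * sum_{i,j} d_i (sqrt(det g) g^{ij} d_j u). *)
Definition laplacian (g1 g2 : R -> R) (u : R -> R -> R) (s t : R) : R :=
  let sd := fun s t => sqrt (metDet g1 g2 s t) in
  let flux_s := fun s t =>
    sd s t * ((metG g1 g2 s t / metDet g1 g2 s t) * pd_s u s t
              - (metF g1 g2 s t / metDet g1 g2 s t) * pd_t u s t) in
  let flux_t := fun s t =>
    sd s t * (- (metF g1 g2 s t / metDet g1 g2 s t) * pd_s u s t
              + (metE g1 g2 s t / metDet g1 g2 s t) * pd_t u s t) in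
  / sd s t * (pd_s flux_s s t + pd_t flux_t s t).

Definition C2_at (u : R -> R -> R) (s t : R) : Prop :=
  continuity_2d_pt u s t /\
  ex_derive (fun s' => u s' t) s /\ ex_derive (fun t' => u s t') t /\
  continuity_2d_pt (pd_s u) s t /\ continuity_2d_pt (pd_t u) s t /\
  ex_derive (fun s' => pd_s u s' t) s /\ ex_derive (fun t' => pd_s u s t') t /\
  ex_derive (fun s' => pd_t u s' t) s /\ ex_derive (fun t' => pd_t u s t') t /\
  continuity_2d_pt (pd_s (pd_s u)) s t /\ continuity_2d_pt (pd_t (pd_s u)) s t /\
  continuity_2d_pt (pd_s (pd_t u)) s t /\ continuity_2d_pt (pd_t (pd_t u)) s t.

(* A function on E = [0,oo) x S^1 (2pi-periodic in theta), continuous on E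
   (including the boundary s = 0). *)
Definition fun_on_E (u : R -> R -> R) : Prop :=
  (forall s t, 0 <= s -> u s (t + 2 * PI) = u s t) /\
  (forall s0 t0, 0 <= s0 -> forall eps, 0 < eps -> exists delta, 0 < delta /\
     forall s t, 0 <= s -> Rabs (s - s0) < delta -> Rabs (t - t0) < delta ->
       Rabs (u s t - u s0 t0) < eps).

Definition bounded_harmonic (g1 g2 : R -> R) (u : R -> R -> R) : Prop :=
  fun_on_E u /\
  (forall s t, 0 < s -> C2_at u s t /\ laplacian g1 g2 u s t = 0) /\
  (exists M, forall s t, 0 <= s -> Rabs (u s t) <= M).

(* E is parabolic: bounded harmonic functions are determined by their
   boundary values (on the boundary circle s = 0). *)
Definition parabolic (g1 g2 : R -> R) : Prop :=
  forall u v, bounded_harmonic g1 g2 u -> bounded_harmonic g1 g2 v ->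
    (forall t, u 0 t = v 0 t) -> forall s t, 0 <= s -> u s t = v s t.

Definition hyp_length (g1 g2 : R -> R) (S : R) : R :=
  RInt (fun s => sqrt (Derive g1 s ^ 2 + Derive g2 s ^ 2) / g2 s) 0 S.
Definition infinite_hyp_length (g1 g2 : R -> R) : Prop :=
  forall M : R, exists S, 0 <= S /\ M < hyp_length g1 g2 S.

(* Complete end of revolution about the x3-axis, generated by
   gamma = (g1, 0, g2) on [0,oo). *)
Definition complete_end_of_revolution (g1 g2 : R -> R) : Prop :=
  smooth g1 /\ smooth g2 /\
  (forall s, 0 <= s -> 0 < Derive g1 s ^ 2 + Derive g2 s ^ 2) /\
  (forall s, 0 <= s -> 0 < g1 s) /\
  (forall s, 0 <= s -> 0 < g2 s) /\
  infinite_hyp_length g1 g2.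

(* Main.v *)
Require Import Defs.
From Stdlib Require Import Reals.
From Coquelicot Require Import Coquelicot.
From Stdlib Require Import Lra Lia ZArith Classical.
From mathcomp Require all_boot all_order all_algebra.
From mathcomp Require all_classical all_reals all_analysis.
From mathcomp Require Rstruct Rstruct_topology.
Open Scope R_scope.

Module EVTM.
From mathcomp Require Import all_boot all_order all_algebra.
From mathcomp Require Import all_classical all_reals all_analysis.
From mathcomp Require Import Rstruct Rstruct_topology.
Import Order.TTheory GRing.Theory Num.Theory.
Import numFieldNormedType.Exports.
Local Open Scope classical_set_scope.
Local Open Scope ring_scope.

Lemma EVT2 (f : R -> R -> R) (a b c d : R) : (a <= b -> c <= d ->
 (forall x0 y0, a <= x0 <= b -> c <= y0 <= d -> forall eps, 0 < eps ->
   exists delta, 0 < delta /\ forall x y, a <= x <= b -> c <= y <= d ->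
      Rabs (x-x0) < delta -> Rabs(y-y0) < delta -> Rabs (f x y - f x0 y0) < eps) ->
 exists x0 y0, (a <= x0 <= b) /\ (c <= y0 <= d) /\
   forall x y, a <= x <= b -> c <= y <= d -> f x y <= f x0 y0)%coqR.
Proof.
move=> /RleP ab /RleP cd cont.
pose A := `[a, b] `*` `[c, d].
have A0 : A !=set0 by exists (a, c); split => /=; rewrite in_itv /= lexx ?ab ?cd.
have cA : compact A by apply: compact_setX; exact: segment_compact.
have cF : {within A, continuous (fun p : R * R => f p.1 p.2)}.
  rewrite continuous_subspace_in => p /set_mem Ap.

  apply/(@cvgrPdist_lt _ R^o) => e /RltP e0.
  case: p Ap => x0 y0 Ap.
  have [/= Hx0 Hy0] := Ap.
  move: Hx0 Hy0; rewrite !in_itv /= => /andP[/RleP h1 /RleP h2] /andP[/RleP h3 /RleP h4].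
  have [del [del0 H]] := cont x0 y0 (conj h1 h2) (conj h3 h4) e e0.
  rewrite -nbhs_subspace_in //.
  rewrite /within /=; apply/nbhs_ballP; exists del => /=; first exact/RltP.
  move=> [x y] [/= Bx By] [/= Ax Ay].
  move: Ax Ay; rewrite !in_itv /= => /andP[/RleP k1 /RleP k2] /andP[/RleP k3 /RleP k4].
  move: Bx By; rewrite /ball /= => /RltP Bx /RltP By.
  rewrite /from_subspace /=.
  have := H x y (conj k1 k2) (conj k3 k4).
  move=> HH; apply/RltP.
  change (Rabs (f x0 y0 - f x y) < e)%coqR.
  rewrite Rabs_minus_sym; apply: HH.
  - rewrite Rabs_minus_sym; exact: Bx.
  - rewrite Rabs_minus_sym; exact: By.
have [[x0 y0] /set_mem [/= Hx Hy] Hmax] := compact_EVT_max A0 cA cF.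
move: Hx Hy; rewrite !in_itv /= => /andP[/RleP ? /RleP ?] /andP[/RleP ? /RleP ?].
exists x0, y0; split; [by []|split; [by []|]].
move=> x y [/RleP ? /RleP ?] [/RleP ? /RleP ?]; apply/RleP; apply: (Hmax (x, y)).
by apply/mem_set; split; rewrite /= in_itv /= ; apply/andP.
Qed.
End EVTM.

Lemma EVT2 (f : R -> R -> R) (a b c d : R) : a <= b -> c <= d ->
 (forall x0 y0, a <= x0 <= b -> c <= y0 <= d -> forall eps, 0 < eps ->
   exists delta, 0 < delta /\ forall x y, a <= x <= b -> c <= y <= d ->
      Rabs (x-x0) < delta -> Rabs(y-y0) < delta -> Rabs (f x y - f x0 y0) < eps) ->
 exists x0 y0, (a <= x0 <= b) /\ (c <= y0 <= d) /\
   forall x y, a <= x <= b -> c <= y <= d -> f x y <= f x0 y0.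
Proof. exact (EVTM.EVT2 f a b c d). Qed.


Lemma deriv_pos_right (k : R -> R) x0 d : is_derive k x0 d -> k x0 = 0 -> 0 < d ->
  exists del, 0 < del /\ forall c, x0 < c < x0 + del -> 0 < k c.
Proof.
intros Hk H0 Hd. apply is_derive_Reals in Hk.
destruct (Hk d Hd) as [del Hdel].
exists del. split. apply (cond_pos del).
intros c Hc. assert (Hh : c - x0 <> 0) by lra.
assert (Ha : Rabs (c - x0) < del) by (rewrite Rabs_right; lra).
specialize (Hdel (c - x0) Hh Ha). replace (x0 + (c - x0)) with c in Hdel by ring.
rewrite H0 in Hdel. apply Rabs_def2 in Hdel. destruct Hdel as [_ Hdel].
assert (0 < (k c - 0) / (c - x0)) by lra.
assert (Hpos: 0 < c - x0) by lra.
assert (k c = ((k c - 0) / (c - x0)) * (c - x0)) by (field; lra).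
rewrite H1. apply Rmult_lt_0_compat; lra.
Qed.

Lemma fermat (f : R -> R) x0 r l : 0 < r -> (forall x, Rabs (x - x0) < r -> f x <= f x0) ->
  is_derive f x0 l -> l = 0.
Proof.
intros Hr Hmax Hf. apply is_derive_Reals in Hf.
destruct (Rtotal_order l 0) as [Hl|[Hl|Hl]]; [|exact Hl|].
- assert (Hl' : 0 < - l) by lra. destruct (Hf (-l) Hl') as [del Hdel].
  set (h := - (Rmin del r / 2)).
  assert (Hm : 0 < Rmin del r) by (apply Rmin_pos; [apply cond_pos|lra]).
  assert (Hh : h <> 0) by (unfold h; lra).
  assert (Hm1 := Rmin_l del r). assert (Hm2 := Rmin_r del r).
  assert (Ha : Rabs h < del) by (unfold h; rewrite Rabs_left; lra).
  specialize (Hdel h Hh Ha). apply Rabs_def2 in Hdel. destruct Hdel as [Hd _].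
  assert (Hq : (f (x0 + h) - f x0) / h < 0) by lra.
  assert (f (x0 + h) <= f x0) by (apply Hmax; replace (x0 + h - x0) with h by ring; rewrite Rabs_left; unfold h; lra).
  assert (Hq2 : f (x0 + h) - f x0 = (f (x0 + h) - f x0) / h * h) by (field; exact Hh).
  assert (h < 0) by (unfold h; lra).
  nra.
- destruct (Hf l Hl) as [del Hdel].
  set (h := (Rmin del r / 2)).
  assert (Hm : 0 < Rmin del r) by (apply Rmin_pos; [apply cond_pos|lra]).
  assert (Hh : h <> 0) by (unfold h; lra).
  assert (Hm1 := Rmin_l del r). assert (Hm2 := Rmin_r del r).
  assert (Ha : Rabs h < del) by (unfold h; rewrite Rabs_right; lra).
  specialize (Hdel h Hh Ha). apply Rabs_def2 in Hdel. destruct Hdel as [_ Hd].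
  assert (Hq : 0 < (f (x0 + h) - f x0) / h) by lra.
  assert (f (x0 + h) <= f x0) by (apply Hmax; replace (x0 + h - x0) with h by ring; rewrite Rabs_right; unfold h; lra).
  assert (Hq2 : f (x0 + h) - f x0 = (f (x0 + h) - f x0) / h * h) by (field; exact Hh).
  assert (0 < h) by (unfold h; lra).
  nra.
Qed.

Lemma maxtest (f f' P k : R->R) x0 r d :
 0<r -> (forall x, Rabs(x-x0)<r -> f x <= f x0) ->
 (forall x, Rabs(x-x0)<r -> is_derive f x (f' x)) ->
 (forall x, Rabs(x-x0)<r -> 0 < P x) ->
 (forall x, Rabs(x-x0)<r -> k x = P x * f' x) ->
 is_derive k x0 d -> d <= 0.
Proof.
intros Hr Hmax Hf HP Hk Hd.
assert (H0 : Rabs (x0 - x0) < r) by (replace (x0 - x0) with 0 by ring; rewrite Rabs_R0; lra).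
assert (Hf0 : f' x0 = 0) by (apply (fermat f x0 r); auto).
assert (Hk0 : k x0 = 0) by (rewrite Hk; auto; rewrite Hf0; ring).
destruct (Rle_or_lt d 0) as [Hle|Hlt]; [exact Hle|exfalso].
destruct (deriv_pos_right k x0 d Hd Hk0 Hlt) as [del [Hdel Hpos]].
set (h := Rmin del r / 2).
assert (Hm : 0 < Rmin del r) by (apply Rmin_pos; lra).
assert (Hm1 := Rmin_l del r). assert (Hm2 := Rmin_r del r).
assert (Hhp : 0 < h) by (unfold h; lra).
destruct (MVT_cor2 f f' x0 (x0 + h)) as [c [Hc1 Hc2]].
- lra.
- intros c Hc. apply is_derive_Reals. apply Hf.
  rewrite Rabs_right by lra. unfold h in *; lra.
- assert (Hin : Rabs (c - x0) < r) by (rewrite Rabs_right by lra; unfold h in *; lra).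
  assert (Hkc : 0 < k c) by (apply Hpos; unfold h in *; lra).
  rewrite Hk in Hkc by exact Hin.
  assert (HPc := HP c Hin).
  assert (Hfc : 0 < f' c).
  { destruct (Rle_or_lt (f' c) 0); [|assumption]. nra. }
  assert (f (x0 + h) <= f x0) by (apply Hmax; rewrite Rabs_right; unfold h in *; lra).
  nra.
Qed.

Definition A0 (g1 g2 : R -> R) s := Derive g1 s ^ 2 + Derive g2 s ^ 2.
Definition E0 (g1 g2 : R -> R) s := A0 g1 g2 s / g2 s ^ 2.
Definition G0 (g1 g2 : R -> R) s := g1 s ^ 2 / g2 s ^ 2.

Section Met.
Variables g1 g2 : R -> R.
Hypothesis d1 : forall x, ex_derive g1 x.

Lemma pdsX1 s t : pd_s (X1 g1 g2) s t = Derive g1 s * cos t.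
Proof. unfold pd_s, X1. apply Derive_scal_l. Qed.
Lemma pdsX2 s t : pd_s (X2 g1 g2) s t = Derive g1 s * sin t.
Proof. unfold pd_s, X2. apply Derive_scal_l. Qed.
Lemma pdsX3 s t : pd_s (X3 g1 g2) s t = Derive g2 s.
Proof. reflexivity. Qed.
Lemma pdtX1 s t : pd_t (X1 g1 g2) s t = - g1 s * sin t.
Proof. unfold pd_t, X1. apply is_derive_unique. auto_derive; auto. ring. Qed.
Lemma pdtX2 s t : pd_t (X2 g1 g2) s t = g1 s * cos t.
Proof. unfold pd_t, X2. apply is_derive_unique. auto_derive; auto. ring. Qed.
Lemma pdtX3 s t : pd_t (X3 g1 g2) s t = 0.
Proof. unfold pd_t, X3. apply Derive_const. Qed.

Lemma sc t : cos t ^ 2 + sin t ^ 2 = 1.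
Proof. rewrite <- (sin2_cos2 t). unfold Rsqr. ring. Qed.

Lemma metE_eq s t : metE g1 g2 s t = E0 g1 g2 s.
Proof.
unfold metE, E0, A0. rewrite pdsX1, pdsX2, pdsX3. unfold X3. f_equal.
assert (H := sc t). nra.
Qed.
Lemma metF_eq s t : metF g1 g2 s t = 0.
Proof.
unfold metF. rewrite pdsX1, pdsX2, pdsX3, pdtX1, pdtX2, pdtX3. unfold Rdiv. ring.
Qed.
Lemma metG_eq s t : metG g1 g2 s t = G0 g1 g2 s.
Proof.
unfold metG, G0. rewrite pdtX1, pdtX2, pdtX3. unfold X3. f_equal.
assert (H := sc t). nra.
Qed.
Lemma metDet_eq s t : metDet g1 g2 s t = E0 g1 g2 s * G0 g1 g2 s.
Proof. unfold metDet. rewrite metE_eq, metF_eq, metG_eq. ring. Qed.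
End Met.

Definition P0 (g1 g2 : R -> R) s := sqrt (E0 g1 g2 s * G0 g1 g2 s) * (G0 g1 g2 s / (E0 g1 g2 s * G0 g1 g2 s)).
Definition Q0 (g1 g2 : R -> R) s := sqrt (E0 g1 g2 s * G0 g1 g2 s) * (E0 g1 g2 s / (E0 g1 g2 s * G0 g1 g2 s)).

Lemma lap_eq g1 g2 u s t :
  laplacian g1 g2 u s t = 0 -> 0 < E0 g1 g2 s * G0 g1 g2 s ->
  Derive (fun s' => P0 g1 g2 s' * pd_s u s' t) s = - (Q0 g1 g2 s * pd_t (pd_t u) s t).
Proof.
intros H Hp. unfold laplacian in H. cbv zeta in H.
rewrite metDet_eq in H.
assert (Hs : 0 < sqrt (E0 g1 g2 s * G0 g1 g2 s)) by (apply sqrt_lt_R0; exact Hp).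
apply Rmult_integral in H. destruct H as [H|H].
{ exfalso. apply (Rinv_neq_0_compat _ (Rgt_not_eq _ _ Hs)). exact H. }
match type of H with context [pd_s ?F s t] => change (pd_s F s t) with (Derive (fun s' => F s' t) s) in H end.
match type of H with context [pd_t ?F s t] => change (pd_t F s t) with (Derive (fun t' => F s t') t) in H end.
cbv beta in H.
erewrite Derive_ext in H.
2:{ intros s'. rewrite (metDet_eq g1 g2), (metF_eq g1 g2), (metG_eq g1 g2).
    instantiate (1 := fun s' => P0 g1 g2 s' * pd_s u s' t). simpl. unfold P0, Rdiv. ring. }
erewrite (Derive_ext _ _ t) in H.
2:{ intros t0. instantiate (1 := fun t0 => Q0 g1 g2 s * pd_t u s t0). simpl. rewrite (metDet_eq g1 g2), (metF_eq g1 g2), (metE_eq g1 g2). unfold Q0, Rdiv. ring. }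
rewrite Derive_scal in H. change (pd_t (pd_t u) s t) with (Derive (pd_t u s) t). lra.
Qed.

Lemma isd3 (a b c : R -> R) x da db dc : is_derive a x da -> is_derive b x db -> is_derive c x dc ->
  is_derive (fun y => (a y - b y) + c y) x ((da - db) + dc).
Proof.
intros Ha Hb Hc. apply (is_derive_plus (fun y => a y - b y) c). 
apply (is_derive_minus a b); auto. auto.
Qed.

Lemma isd2 (a b : R -> R) x da db : is_derive a x da -> is_derive b x db ->
  is_derive (fun y => a y - b y) x (da - db).
Proof. intros Ha Hb. apply (is_derive_minus a b); auto. Qed.

Lemma shift_nat (u : R -> R -> R) s t (k : nat) : (forall s t, 0 <= s -> u s (t + 2 * PI) = u s t) -> 0 <= s ->
  u s (t + 2 * PI * INR k) = u s t /\ u s (t - 2 * PI * INR k) = u s t.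
Proof.
intros Hp Hs. induction k as [|k IH].
- simpl. split; f_equal; ring.
- destruct IH as [IH1 IH2]. rewrite S_INR. split.
  + replace (t + 2 * PI * (INR k + 1)) with ((t + 2 * PI * INR k) + 2 * PI) by ring.
    rewrite Hp by exact Hs. exact IH1.
  + rewrite <- IH2. rewrite <- (Hp s (t - 2 * PI * (INR k + 1))) by exact Hs. f_equal. ring.
Qed.

Lemma period_rep t : exists t', 0 <= t' <= 2 * PI /\ forall (u : R -> R -> R) s,
  (forall s t, 0 <= s -> u s (t + 2 * PI) = u s t) -> 0 <= s -> u s t = u s t'.
Proof.
assert (HPI := PI_RGT_0).
set (x := t / (2 * PI)). destruct (archimed x) as [Ha1 Ha2].
set (n := (up x - 1)%Z).
assert (Hn : IZR n = IZR (up x) - 1) by (unfold n; rewrite minus_IZR; reflexivity).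
exists (t - 2 * PI * IZR n). split.
- assert (Hx : t = 2 * PI * x) by (unfold x; field; lra).
  split; rewrite Hn; nra.
- intros u s Hp Hs.
  destruct (Z.le_gt_cases 0 n) as [Hz|Hz].
  + rewrite <- (Z2Nat.id n Hz). rewrite <- INR_IZR_INZ.
    destruct (shift_nat u s (t - 2 * PI * INR (Z.to_nat n)) (Z.to_nat n) Hp Hs) as [H1 _].
    rewrite <- H1. f_equal. ring.
  + assert (Hz' : (0 <= - n)%Z) by lia.
    replace (IZR n) with (- IZR (- n)) by (rewrite opp_IZR; ring).
    rewrite <- (Z2Nat.id (- n) Hz'). rewrite <- INR_IZR_INZ.
    destruct (shift_nat u s (t - 2 * PI * - INR (Z.to_nat (- n))) (Z.to_nat (- n)) Hp Hs) as [_ H2].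
    rewrite <- H2. f_equal. ring.
Qed.

Definition cont2 (F : R -> R -> R) := forall x0 y0, 0 <= x0 -> forall eps, 0 < eps ->
  exists del, 0 < del /\ forall x y, 0 <= x -> Rabs (x - x0) < del -> Rabs (y - y0) < del ->
  Rabs (F x y - F x0 y0) < eps.

Lemma cont2_E u : fun_on_E u -> cont2 u.
Proof. intros [_ H]. exact H. Qed.

Lemma cont2_comb F1 F2 F3 : cont2 F1 -> cont2 F2 -> cont2 F3 ->
  cont2 (fun x y => (F1 x y - F2 x y) + F3 x y).
Proof.
intros H1 H2 H3 x0 y0 Hx0 eps Heps.
assert (He : 0 < eps / 3) by lra.
destruct (H1 x0 y0 Hx0 _ He) as [d1 [Hd1 K1]].
destruct (H2 x0 y0 Hx0 _ He) as [d2 [Hd2 K2]].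
destruct (H3 x0 y0 Hx0 _ He) as [d3 [Hd3 K3]].
exists (Rmin d1 (Rmin d2 d3)). split. apply Rmin_pos; auto; apply Rmin_pos; auto.
intros x y Hx Ha Hb.
assert (Hm1 := Rmin_l d1 (Rmin d2 d3)). assert (Hm2 := Rmin_r d1 (Rmin d2 d3)).
assert (Hm3 := Rmin_l d2 d3). assert (Hm4 := Rmin_r d2 d3).
specialize (K1 x y Hx ltac:(lra) ltac:(lra)). specialize (K2 x y Hx ltac:(lra) ltac:(lra)).
specialize (K3 x y Hx ltac:(lra) ltac:(lra)).
apply Rabs_def2 in K1. apply Rabs_def2 in K2. apply Rabs_def2 in K3.
apply Rabs_def1; lra.
Qed.

Lemma cont2_1d (f : R -> R) : (forall x, continuous f x) -> cont2 (fun x y => f x).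
Proof.
intros Hf x0 y0 Hx0 eps Heps.
assert (Hc : continuity_pt f x0) by (apply continuity_pt_filterlim; apply Hf).
destruct (Hc eps Heps) as [alp [Halp K]].
exists alp. split; auto. intros x y Hx Ha Hb.
destruct (Req_dec x x0) as [E|E].
- subst. replace (f x0 - f x0) with 0 by ring. rewrite Rabs_R0. exact Heps.
- apply (K x). split. split. exact I. auto. exact Ha.
Qed.


Section Geo.
Variables g1 g2 : R -> R.
Hypothesis sm1 : smooth g1.
Hypothesis sm2 : smooth g2.
Hypothesis reg : forall s, 0 <= s -> 0 < Derive g1 s ^ 2 + Derive g2 s ^ 2.
Hypothesis pos1 : forall s, 0 <= s -> 0 < g1 s.
Hypothesis pos2 : forall s, 0 <= s -> 0 < g2 s.

Lemma dg1 x : ex_derive g1 x. Proof. exact (sm1 1%nat x). Qed.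
Lemma dg2 x : ex_derive g2 x. Proof. exact (sm2 1%nat x). Qed.
Lemma ddg1 x : ex_derive (Derive g1) x. Proof. exact (sm1 2%nat x). Qed.
Lemma ddg2 x : ex_derive (Derive g2) x. Proof. exact (sm2 2%nat x). Qed.

Lemma E0pos s : 0 <= s -> 0 < E0 g1 g2 s.
Proof. intros Hs. unfold E0, A0. apply Rdiv_lt_0_compat. apply reg; auto. apply pow_lt. auto. Qed.
Lemma G0pos s : 0 <= s -> 0 < G0 g1 g2 s.
Proof. intros Hs. unfold G0. apply Rdiv_lt_0_compat; apply pow_lt; auto. Qed.
Lemma EGpos s : 0 <= s -> 0 < E0 g1 g2 s * G0 g1 g2 s.
Proof. intros Hs. apply Rmult_lt_0_compat. apply E0pos; auto. apply G0pos; auto. Qed.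
Lemma P0pos s : 0 <= s -> 0 < P0 g1 g2 s.
Proof. intros Hs. unfold P0. apply Rmult_lt_0_compat. apply sqrt_lt_R0, EGpos; auto.
  apply Rdiv_lt_0_compat. apply G0pos; auto. apply EGpos; auto. Qed.
Lemma Q0pos s : 0 <= s -> 0 < Q0 g1 g2 s.
Proof. intros Hs. unfold Q0. apply Rmult_lt_0_compat. apply sqrt_lt_R0, EGpos; auto.
  apply Rdiv_lt_0_compat. apply E0pos; auto. apply EGpos; auto. Qed.

Lemma P0der s : 0 <= s -> ex_derive (P0 g1 g2) s.
Proof.
intros Hs. assert (H1 := EGpos s Hs). assert (H2 := pos2 s Hs).
unfold P0, E0, G0, A0 in *. simpl in H1. auto_derive.
repeat split; try (apply ddg1||apply ddg2||apply dg1||apply dg2); try lra; nra.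
Qed.

Lemma Q0der s : 0 <= s -> ex_derive (Q0 g1 g2) s.
Proof.
intros Hs. assert (H1 := EGpos s Hs). assert (H2 := pos2 s Hs).
unfold Q0, E0, G0, A0 in *. simpl in H1. auto_derive.
repeat split; try (apply ddg1||apply ddg2||apply dg1||apply dg2); try lra; nra.
Qed.


Definition qq s := / P0 g1 g2 (Rabs s).
Definition hh s := RInt qq 0 s.

Lemma qq_pos x : 0 < qq x.
Proof. unfold qq. apply Rinv_0_lt_compat, P0pos, Rabs_pos. Qed.

Lemma qq_cont x : continuous qq x.
Proof.
unfold qq. apply (continuous_comp Rabs (fun y => / P0 g1 g2 y)).
apply continuous_Rabs.
apply (@ex_derive_continuous R_AbsRing R_NormedModule). apply ex_derive_inv. apply P0der, Rabs_pos.
apply Rgt_not_eq, P0pos, Rabs_pos.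
Qed.

Lemma qq_int a b : ex_RInt qq a b.
Proof. apply (@ex_RInt_continuous R_CompleteNormedModule). intros; apply qq_cont. Qed.

Lemma hh_der x : is_derive hh x (qq x).
Proof.
unfold hh. apply (@is_derive_RInt R_CompleteNormedModule qq _ 0). apply filter_forall. intros b. apply (@RInt_correct R_CompleteNormedModule), qq_int.
apply qq_cont.
Qed.

Lemma hh_cont x : continuous hh x.
Proof. apply (@ex_derive_continuous R_AbsRing R_NormedModule). eexists. apply hh_der. Qed.

Lemma hh0 : hh 0 = 0.
Proof. unfold hh. rewrite RInt_point. reflexivity. Qed.

Lemma hh_mono a b : a <= b -> hh a <= hh b.
Proof.
intros Hab. unfold hh. rewrite <- (@RInt_Chasles R_CompleteNormedModule qq 0 a b) by apply qq_int.
assert (0 <= RInt qq a b). { apply RInt_ge_0; auto. apply qq_int. intros; left; apply qq_pos. }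
simpl. unfold plus. simpl. lra.
Qed.

Lemma hh_nonneg s : 0 <= s -> 0 <= hh s.
Proof. intros Hs. rewrite <- hh0. apply hh_mono; auto. Qed.

Lemma P0qq s : 0 <= s -> P0 g1 g2 s * qq s = 1.
Proof. intros Hs. unfold qq. rewrite Rabs_right by lra. field. apply Rgt_not_eq, P0pos; auto. Qed.

Lemma qq_formula s : 0 <= s -> qq s = sqrt (A0 g1 g2 s) / g1 s.
Proof.
intros Hs. unfold qq. rewrite Rabs_right by lra.
assert (HA : 0 < A0 g1 g2 s) by (apply reg; auto).
assert (H1 := pos1 s Hs). assert (H2 := pos2 s Hs).
assert (Hsq : 0 < sqrt (A0 g1 g2 s)) by (apply sqrt_lt_R0; auto).
assert (Hsq2 := sqrt_sqrt (A0 g1 g2 s) (Rlt_le _ _ HA)).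
unfold P0, E0, G0.
replace (A0 g1 g2 s / g2 s ^ 2 * (g1 s ^ 2 / g2 s ^ 2)) with ((sqrt (A0 g1 g2 s) * g1 s / g2 s ^ 2) ^ 2).
2:{ rewrite <- Hsq2 at 2. field. lra. }
rewrite sqrt_pow2.
2:{ apply Rdiv_le_0_compat. apply Rlt_le, Rmult_lt_0_compat; auto. apply pow_lt; auto. }
field; repeat split; lra.
Qed.
Variable z : R.
Hypothesis zpos : 0 < z.
Hypothesis zle : forall s, 0 <= s -> z <= g2 s.
Hypothesis inf : infinite_hyp_length g1 g2.


Lemma ln_bound s : 0 <= s -> ln (g1 s) - ln (g1 0) <= hh s.
Proof.
intros Hs.
assert (HI : is_RInt (fun x => Derive g1 x / g1 x) 0 s (minus (ln (g1 s)) (ln (g1 0)))).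
{ apply (@is_RInt_derive R_CompleteNormedModule (fun x => ln (g1 x))).
  - intros x Hx. rewrite Rmin_left in Hx by lra. rewrite Rmax_right in Hx by lra.
    assert (H1 := pos1 x (proj1 Hx)).
    auto_derive. split. apply dg1; auto. split; auto. change (Derive (fun x0 => g1 x0) x) with (Derive g1 x). unfold Rdiv. ring.
  - intros x Hx. rewrite Rmin_left in Hx by lra. rewrite Rmax_right in Hx by lra.
    assert (H1 := pos1 x (proj1 Hx)).
    apply (@ex_derive_continuous R_AbsRing R_NormedModule).
    auto_derive. repeat split; try (apply ddg1||apply dg1); lra. }
apply (@is_RInt_unique R_CompleteNormedModule) in HI. unfold minus, plus, opp in HI. simpl in HI.
replace (ln (g1 s) - ln (g1 0)) with (RInt (fun x => Derive g1 x / g1 x) 0 s) by exact HI.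
unfold hh. apply RInt_le; auto.
- apply (@ex_RInt_continuous R_CompleteNormedModule). intros x Hx.
  rewrite Rmin_left in Hx by lra. rewrite Rmax_right in Hx by lra.
  assert (H1 := pos1 x (proj1 Hx)).
  apply (@ex_derive_continuous R_AbsRing R_NormedModule).
  auto_derive. repeat split; try (apply ddg1||apply dg1); lra.
- apply qq_int.
- intros x Hx. rewrite qq_formula by lra.
  assert (H1 := pos1 x ltac:(lra)).
  unfold Rdiv. apply Rmult_le_compat_r. left; apply Rinv_0_lt_compat; auto.
  unfold A0. apply Rle_trans with (Rabs (Derive g1 x)). apply Rle_abs.
  rewrite <- sqrt_Rsqr_abs. apply sqrt_le_1_alt. unfold Rsqr. nra.
Qed.

Lemma hyp_int S : 0 <= S -> ex_RInt (fun s => sqrt (Derive g1 s ^ 2 + Derive g2 s ^ 2) / g2 s) 0 S.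
Proof.
intros HS. apply (@ex_RInt_continuous R_CompleteNormedModule). intros x Hx.
rewrite Rmin_left in Hx by lra. rewrite Rmax_right in Hx by lra.
assert (H1 := pos2 x (proj1 Hx)). assert (H2 := reg x (proj1 Hx)). simpl in H2.
apply (@ex_derive_continuous R_AbsRing R_NormedModule).
auto_derive. repeat split; try (apply ddg1||apply dg1||apply ddg2||apply dg2); lra.
Qed.

Lemma hh_unbounded K : exists S, 0 <= S /\ K < hh S.
Proof.
destruct (classic (exists S, 0 <= S /\ K < hh S)) as [H|H]; [exact H|exfalso].
assert (HK : forall S, 0 <= S -> hh S <= K).
{ intros S HS. destruct (Rle_or_lt (hh S) K); auto. exfalso; apply H; exists S; auto. }
assert (H0 := pos1 0 (Rle_refl 0)).
set (b := exp (ln (g1 0) + K)).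
assert (Hb : forall s, 0 <= s -> g1 s <= b).
{ intros s Hs. assert (H1 := pos1 s Hs). rewrite <- (exp_ln (g1 s)) by exact H1.
  assert (ln (g1 s) <= ln (g1 0) + K) by (assert (H2 := ln_bound s Hs); assert (H3 := HK s Hs); lra).
  unfold b. destruct (Rle_lt_or_eq_dec _ _ H2) as [H4|H4]. left; apply exp_increasing; auto. rewrite H4; lra. }
assert (Hbpos : 0 < b) by (unfold b; apply exp_pos).
destruct (inf (b / z * K)) as [S [HS HL]].
assert (HL2 : hyp_length g1 g2 S <= b / z * hh S).
{ unfold hyp_length, hh.
  replace (b / z * RInt qq 0 S) with (RInt (fun x => scal (b / z) (qq x)) 0 S).
  2:{ rewrite (@RInt_scal R_CompleteNormedModule) by apply qq_int. reflexivity. }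
  apply RInt_le; auto. apply hyp_int; auto.
  apply (@ex_RInt_continuous R_CompleteNormedModule). intros x Hx.
  apply (continuous_comp qq (fun y => b / z * y)). apply qq_cont. apply (@ex_derive_continuous R_AbsRing R_NormedModule). auto_derive. auto.
  intros x Hx. unfold scal; simpl; unfold mult; simpl.
  rewrite qq_formula by lra. unfold A0.
  assert (H1 := pos1 x ltac:(lra)). assert (H2 := pos2 x ltac:(lra)).
  assert (H3 := zle x ltac:(lra)). assert (H4 := Hb x ltac:(lra)).
  set (a := sqrt (Derive g1 x ^ 2 + Derive g2 x ^ 2)).
  assert (Ha : 0 <= a) by apply sqrt_pos.
  apply Rle_trans with (a / z).
  { unfold Rdiv. apply Rmult_le_compat_l; auto. apply Rinv_le_contravar; auto. }
  replace (b / z * (a / g1 x)) with ((a / z) * (b / g1 x)) by (field; lra).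
  rewrite <- (Rmult_1_r (a / z)) at 1. apply Rmult_le_compat_l.
  unfold Rdiv; apply Rmult_le_pos; auto; left; apply Rinv_0_lt_compat; auto.
  apply (Rmult_le_reg_r (g1 x)); auto. unfold Rdiv. rewrite Rmult_assoc, Rinv_l by lra. lra. }
assert (HK2 := HK S HS).
assert (b / z * hh S <= b / z * K) by (apply Rmult_le_compat_l; auto; unfold Rdiv; apply Rmult_le_pos; [lra|left; apply Rinv_0_lt_compat; auto]).
lra.
Qed.


Lemma half_ineq u v : bounded_harmonic g1 g2 u -> bounded_harmonic g1 g2 v ->
  (forall t, u 0 t = v 0 t) -> forall s t, 0 <= s -> u s t <= v s t.
Proof.
intros [HEu [Hhu [Mu HMu]]] [HEv [Hhv [Mv HMv]]] Hbd s1 t1 Hs1.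
destruct (Rle_or_lt (u s1 t1 - v s1 t1) 0) as [Hc|Hc]; [lra|exfalso].
set (c := u s1 t1 - v s1 t1) in *.
assert (Hs1p : 0 < s1).
{ destruct Hs1 as [H|H]; auto. subst s1. unfold c in Hc. rewrite Hbd in Hc. lra. }
set (M := Mu + Mv).
assert (HM : forall s t, 0 <= s -> u s t - v s t <= M).
{ intros s t Hs. assert (A1 := HMu s t Hs). assert (A2 := HMv s t Hs).
  assert (A3 := Rle_abs (u s t)). assert (A4 := Rle_abs (- v s t)). rewrite Rabs_Ropp in A4. unfold M; lra. }
assert (Hh1 := hh_nonneg s1 (Rlt_le _ _ Hs1p)).
set (eps := c / (2 * (hh s1 + 1))).
assert (Heps : 0 < eps) by (unfold eps; apply Rdiv_lt_0_compat; lra).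
assert (Heps1 : eps * hh s1 < c / 2).
{ unfold eps. apply (Rmult_lt_reg_r (2 * (hh s1 + 1))); [lra|].
  replace (c / (2 * (hh s1 + 1)) * hh s1 * (2 * (hh s1 + 1))) with (c * hh s1) by (field; lra). nra. }
destruct (hh_unbounded ((M + 1) / eps)) as [S0 [HS0 HhS0]].
set (S := Rmax S0 (s1 + 1)).
assert (HSs1 : s1 < S) by (unfold S; assert (H := Rmax_r S0 (s1 + 1)); lra).
assert (HhS : (M + 1) / eps < hh S) by (apply Rlt_le_trans with (hh S0); auto; apply hh_mono; apply Rmax_l).
assert (HhS2 : M + 1 < eps * hh S).
{ apply (Rmult_lt_compat_l eps) in HhS; auto. replace (eps * ((M + 1) / eps)) with (M + 1) in HhS by (field; lra). lra. }
set (del := 1 / (2 * (hh S ^ 2 + 1))).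
assert (Hdel : 0 < del) by (unfold del; apply Rdiv_lt_0_compat; [lra|]; assert (0 <= hh S ^ 2) by apply pow2_ge_0; lra).
assert (Hdel2 : del * hh S ^ 2 < 1 / 2).
{ assert (0 <= hh S ^ 2) by apply pow2_ge_0. unfold del.
  apply (Rmult_lt_reg_r (2 * (hh S ^ 2 + 1))); [lra|].
  replace (1 / (2 * (hh S ^ 2 + 1)) * hh S ^ 2 * (2 * (hh S ^ 2 + 1))) with (hh S ^ 2) by (field; lra). lra. }
set (psi := fun x => - eps * hh x + del * hh x ^ 2).
set (G := fun x y => (u x y - v x y) + psi x).
assert (Hpsi_der : forall x, is_derive psi x ((- eps + 2 * del * hh x) * qq x)).
{ intros x. unfold psi. auto_derive. repeat split; eexists; apply hh_der.
  change (Derive (fun y => hh y) x) with (Derive hh x). rewrite (is_derive_unique _ _ _ (hh_der x)). simpl. ring. }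
assert (HG : cont2 G).
{ apply cont2_comb. apply cont2_E; exact HEu. apply cont2_E; exact HEv.
  apply (cont2_1d psi). intros x. apply (@ex_derive_continuous R_AbsRing R_NormedModule). eexists; apply Hpsi_der. }
assert (HPI := PI_RGT_0).
destruct (EVT2 G 0 S 0 (2 * PI) ltac:(lra) ltac:(lra)) as [s0 [t0 [Hs0 [Ht0 Hmax]]]].
{ intros x0 y0 Hx0 Hy0 e He. destruct (HG x0 y0 (proj1 Hx0) e He) as [d [Hd K]].
  exists d. split; auto. intros x y Hx Hy. apply K. tauto. }
destruct (period_rep t1) as [t1' [Ht1' Hrep1]].
assert (HGs1 : c / 2 < G s1 t1').
{ unfold G, psi. rewrite <- (Hrep1 u s1), <- (Hrep1 v s1); try apply HEu; try apply HEv; try lra.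
  fold c. assert (0 <= del * hh s1 ^ 2) by (apply Rmult_le_pos; [lra|apply pow2_ge_0]). lra. }
assert (HG0 : c / 2 < G s0 t0) by (apply Rlt_le_trans with (G s1 t1'); auto; apply Hmax; lra).
assert (Hs0p : 0 < s0).
{ destruct (proj1 Hs0) as [H|H]; auto. subst s0. exfalso. unfold G, psi in HG0. rewrite Hbd, hh0 in HG0. lra. }
assert (Hs0S : s0 < S).
{ destruct (proj2 Hs0) as [H|H]; auto. subst s0. exfalso. unfold G, psi in HG0.
  assert (H1 := HM S t0 ltac:(lra)). lra. }
assert (Hmaxt : forall t, G s0 t <= G s0 t0).
{ intros t. destruct (period_rep t) as [t' [Ht' Hrep]].
  unfold G. rewrite (Hrep u s0), (Hrep v s0); try apply HEu; try apply HEv; try lra.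
  apply Hmax; lra. }
assert (Htt : pd_t (pd_t u) s0 t0 - pd_t (pd_t v) s0 t0 <= 0).
{ apply (maxtest (fun t => G s0 t) (fun t => pd_t u s0 t - pd_t v s0 t) (fun _ => 1)
     (fun t => pd_t u s0 t - pd_t v s0 t) t0 1).
  - lra.
  - intros x _. apply Hmaxt.
  - intros x _. unfold G. replace (pd_t u s0 x - pd_t v s0 x) with ((pd_t u s0 x - pd_t v s0 x) + 0) by ring.
    apply (isd3 (fun t => u s0 t) (fun t => v s0 t) (fun _ => psi s0)).
    + apply Derive_correct. apply (Hhu s0 x Hs0p).
    + apply Derive_correct. apply (Hhv s0 x Hs0p).
    + apply (is_derive_const (psi s0)).
  - intros; lra.
  - intros; ring.
  - apply isd2; apply Derive_correct; [apply (Hhu s0 t0 Hs0p)|apply (Hhv s0 t0 Hs0p)]. }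
assert (HEG0 := EGpos s0 (Rlt_le _ _ Hs0p)).
destruct (Hhu s0 t0 Hs0p) as [Cu Lu]. destruct (Hhv s0 t0 Hs0p) as [Cv Lv].
assert (Du := lap_eq g1 g2 u s0 t0 Lu HEG0).
assert (Dv := lap_eq g1 g2 v s0 t0 Lv HEG0).
set (r := Rmin s0 (S - s0)).
assert (Hr : 0 < r) by (unfold r; apply Rmin_pos; lra).
assert (Hr1 := Rmin_l s0 (S - s0)). assert (Hr2 := Rmin_r s0 (S - s0)).
set (fs := fun s => G s t0).
set (fs' := fun s => (pd_s u s t0 - pd_s v s t0) + (-eps + 2 * del * hh s) * qq s).
set (k := fun s => (P0 g1 g2 s * pd_s u s t0 - P0 g1 g2 s * pd_s v s t0) + (- eps + 2 * del * hh s)).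
set (d := (Derive (fun s => P0 g1 g2 s * pd_s u s t0) s0 - Derive (fun s => P0 g1 g2 s * pd_s v s t0) s0) + 2 * del * qq s0).
assert (Hd : d <= 0).
{ apply (maxtest fs fs' (P0 g1 g2) k s0 r d).
  - exact Hr.
  - intros x Hx. apply Rabs_def2 in Hx. unfold fs. apply Hmax; unfold r in *; lra.
  - intros x Hx. apply Rabs_def2 in Hx. assert (Hxp : 0 < x) by (unfold r in *; lra).
    destruct (Hhu x t0 Hxp) as [[_ [Hu2 _]] _]. destruct (Hhv x t0 Hxp) as [[_ [Hv2 _]] _].
    unfold fs, fs', G. apply (isd3 (fun s => u s t0) (fun s => v s t0) psi).
    + apply Derive_correct. exact Hu2.
    + apply Derive_correct. exact Hv2.
    + apply Hpsi_der.
  - intros x Hx. apply Rabs_def2 in Hx. apply P0pos. unfold r in *; lra.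
  - intros x Hx. apply Rabs_def2 in Hx. assert (Hxp : 0 <= x) by (unfold r in *; lra).
    assert (HPq := P0qq x Hxp). unfold k, fs'.
    replace (- eps + 2 * del * hh x) with ((- eps + 2 * del * hh x) * (P0 g1 g2 x * qq x)) at 1 by (rewrite HPq; ring).
    ring.
  - destruct Cu as [_ [_ [_ [_ [_ [Cu6 _]]]]]]. destruct Cv as [_ [_ [_ [_ [_ [Cv6 _]]]]]].
    unfold k, d. apply (isd3 (fun s => P0 g1 g2 s * pd_s u s t0) (fun s => P0 g1 g2 s * pd_s v s t0) (fun s => - eps + 2 * del * hh s)).
    + apply Derive_correct. apply ex_derive_mult. apply P0der; lra. exact Cu6.
    + apply Derive_correct. apply ex_derive_mult. apply P0der; lra. exact Cv6.
    + auto_derive. repeat split; eexists; apply hh_der.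
      change (Derive (fun y => hh y) s0) with (Derive hh s0). rewrite (is_derive_unique _ _ _ (hh_der s0)). ring. }
unfold d in Hd. rewrite Du, Dv in Hd.
assert (HQ := Q0pos s0 (Rlt_le _ _ Hs0p)). assert (Hq := qq_pos s0).
assert (0 < del * qq s0) by (apply Rmult_lt_0_compat; auto).
nra.
Qed.

End Geo.


Theorem theoremC (g1 g2 : R -> R) (z : R) :
  complete_end_of_revolution g1 g2 ->
  0 < z ->
  (forall s, 0 <= s -> z <= g2 s) ->
  parabolic g1 g2.
Proof.
intros [sm1 [sm2 [reg [pos1 [pos2 inf]]]]] zpos zle u v Hu Hv Hb s t Hs.
apply Rle_antisym.
- exact (half_ineq g1 g2 sm1 sm2 reg pos1 pos2 z zpos zle inf u v Hu Hv Hb s t Hs).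
- exact (half_ineq g1 g2 sm1 sm2 reg pos1 pos2 z zpos zle inf v u Hv Hu (fun t => eq_sym (Hb t)) s t Hs).
Qed.
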